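(* Let $k\ge 1$ be an integer and let $G$ be a graph with minimum degree $\delta(G)\ge k$. Then $G$ has a total $k$-coalition partition.
   Context: All graphs are finite, simple and connected. $N(v)$ denotes the open neighborhood of a vertex $v$. For a graph $G$ with $\delta(G)\ge k$, a set $S\subseteq V(G)$ is a total $k$-dominating set if $|N(v)\cap S|\ge k$ for every $v\in V(G)$. Two disjoint sets $U,W\subseteq V(G)$ form a total $k$-coalition if neither $U$ nor $W$ is a total $k$-dominating set, but $U\cup W$ is a total $k$-dominating set. A total $k$-coalition partition of $G$ is a partition $\Omega=\{V_1,\dots,V_{|\Omega|}\}$ of $V(G)$ such that every $V_i$ forms a total $k$-coalition with some other set $V_j\in\Omega$. *)

(* Defs.v *)
From mathcomp Require Import all_boot.
Set Implicit Arguments. Unset Strict Implicit. Unset Printing Implicit Defensive.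

Definition simple_graph (T : finType) (e : rel T) : Prop :=
  symmetric e /\ irreflexive e.

Definition connected_graph (T : finType) (e : rel T) : Prop :=
  forall x y : T, connect e x y.

Definition nbhd (T : finType) (e : rel T) (v : T) : {set T} := [set u | e v u].

Definition min_deg_ge (T : finType) (e : rel T) (k : nat) : Prop :=
  forall v : T, k <= #|nbhd e v|.

Definition total_k_dom (T : finType) (e : rel T) (k : nat) (S : {set T}) : Prop :=
  forall v : T, k <= #|nbhd e v :&: S|.

Definition total_k_coalition (T : finType) (e : rel T) (k : nat) (U W : {set T}) : Prop :=
  [disjoint U & W] /\ ~ total_k_dom e k U /\ ~ total_k_dom e k W /\
  total_k_dom e k (U :|: W).

Definition total_k_coalition_partition (T : finType) (e : rel T) (k : nat)
    (P : {set {set T}}) : Prop :=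
  partition P [set: T] /\
  forall Vi, Vi \in P -> exists2 Vj, Vj \in P & Vj != Vi /\ total_k_coalition e k Vi Vj.

(* Main.v *)
Require Import Defs.
From mathcomp Require Import all_boot.
Set Implicit Arguments. Unset Strict Implicit. Unset Printing Implicit Defensive.

Section S.
Variables (T : finType) (e : rel T) (k : nat).

Definition blk (f : T -> T) (x : T) : {set T} := [set y in [set: T] | f x == f y].

Definition domb (S : {set T}) : bool := [forall v, k <= #|nbhd e v :&: S|].

Lemma domP S : reflect (total_k_dom e k S) (domb S).
Proof. by apply: (iffP forallP). Qed.

Lemma main n : forall f : T -> T, #|[set f x | x in T]| <= n ->
  (forall x, ~ total_k_dom e k (blk f x)) ->
  exists g : T -> T, (forall x, ~ total_k_dom e k (blk g x)) /\
     (forall x x', g x != g x' -> total_k_dom e k (blk g x :|: blk g x')).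
Proof.
elim: n => [|n IH] f Hc Hnd.
  exists f; split => // x.
  have Hin : f x \in [set f x | x in T] by apply: imset_f.
  have : 0 < #|[set f x | x in T]| by apply/card_gt0P; exists (f x).
  by rewrite ltnNge Hc.
have [/existsP [x /existsP [x' /andP [Hne Hbad]]] | Hgood] :=
  boolP [exists x, exists x', (f x != f x') && ~~ domb (blk f x :|: blk f x')].
  pose f' y := if f y == f x' then f x else f y.
  apply: (IH f').
    have Hsub : [set f' y | y in T] \subset [set f y | y in T] :\ f x'.
      apply/subsetP => _ /imsetP [y _ ->]; rewrite /f' !inE.
      case: ifP => Hy.
        by rewrite Hne imset_f.
      by rewrite Hy imset_f.
    rewrite -ltnS; apply: leq_ltn_trans (subset_leq_card Hsub) _.
    move: Hc; rewrite (cardsD1 (f x')) imset_f //.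
  move=> z.
  have [Hz | Hz] := boolP ((f z == f x) || (f z == f x')).
    have -> : blk f' z = blk f x :|: blk f x'.
      apply/setP => y; rewrite !inE /f'.
      have Hfz : (if f z == f x' then f x else f z) = f x.
        by case/orP: Hz => /eqP ->; rewrite ?eqxx // (negbTE Hne).
      rewrite Hfz; case: ifP => Hy.
        by rewrite eqxx (eqP Hy) eqxx orbT.
      by rewrite eq_sym (eq_sym (f x')) Hy orbF eq_sym.
    by move/domP; rewrite (negbTE Hbad).
  have -> : blk f' z = blk f z.
    apply/setP => y; rewrite !inE /f'.
    move: Hz; rewrite negb_or => /andP [Hzx Hzx'].
    rewrite (negbTE Hzx'); case: ifP => Hy.
      by rewrite (negbTE Hzx) (eqP Hy) (negbTE Hzx').
    by [].
  exact: Hnd.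
exists f; split => // x x' Hne; apply/domP.
apply/negPn; apply/negP => Hb; move/negP: Hgood; apply.
by apply/existsP; exists x; apply/existsP; exists x'; rewrite Hne Hb.
Qed.

End S.

Theorem proposition2p1 (T : finType) (e : rel T) (k : nat) :
  simple_graph e -> connected_graph e -> 1 <= k -> min_deg_ge e k ->
  exists P : {set {set T}}, total_k_coalition_partition e k P.
Proof.
move=> [Hsym Hirr] _ Hk Hmin.
have Hsing : forall x, ~ total_k_dom e k (blk id x).
  move=> x H; move: (H x).
  have -> : nbhd e x :&: blk id x = set0.
    apply/setP => y; rewrite !inE /=.
    by case: (x =P y) => [<-|_]; rewrite ?Hirr ?andbF.
  by rewrite cards0 leqNgt Hk.
have [g [Hnd Hd]] := main (n := #|[set id x | x in T]|) (leqnn _) Hsing.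
exists (preim_partition g [set: T]); split; first exact: preim_partitionP.
move=> _ /imsetP [x _ ->].
have Hb : forall z, [set y in [set: T] | g z == g y] = blk g z by [].
have [/existsP [x' Hx'] | Hall] := boolP [exists x', g x != g x'].
  exists [set y in [set: T] | g x' == g y]; first by apply: imset_f; rewrite inE.
  split.
    apply/negP => /eqP /setP /(_ x'); rewrite !inE !eqxx.
    by rewrite (negbTE Hx').
  rewrite !Hb; split; last split; [|exact: Hnd|split; [exact: Hnd|exact: Hd]].
  rewrite -setI_eq0; apply/eqP/setP => y; rewrite !inE.
  apply/negP => /andP [/eqP H1 /eqP H2].
  by move: Hx'; rewrite H1 H2 eqxx.
exfalso; apply: (Hnd x) => v.
have -> : nbhd e v :&: blk g x = nbhd e v.
  apply/setP => y; rewrite !inE.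
  case E: (g x == g y); first by rewrite !andbT.
  by exfalso; move/negP: Hall; apply; apply/existsP; exists y; rewrite E.
exact: Hmin.
Qed.
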